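(* Let $H$ be an $\aleph_1$-free group and $\phi:\mathcal{H}\to H$ a homomorphism. Then for every finitely generated subgroup $F\le H$ there exists $n\in\omega$ such that $\phi(\mathcal{H}^n)\cap F=\{1_H\}$.
   Context: A group is $\aleph_1$-free if every countable subgroup is free. The Hawaiian earring group $\mathcal{H}$: fix letters $\{a_n^{\pm1}\}_{n\in\omega}$. A word is a function $W:\overline{W}\to\{a_n^{\pm1}\}_{n\in\omega}$ whose domain $\overline{W}$ is a totally ordered set such that for each $m$ the preimage $W^{-1}(\{a_n^{\pm1}\}_{n=0}^m)$ is finite; words are identified up to order isomorphism of domains preserving letters. For $m\in\omega$, $p_m(W)$ is the restriction of $W$ to $\{i: W(i)\in\{a_n^{\pm1}\}_{n=0}^m\}$, a finite word. Two words $W,U$ are equivalent if for every $m$, $p_m(W)$ and $p_m(U)$ are equal in the free group $F(a_0,\dots,a_m)$. $\mathcal{H}$ is the set of equivalence classes with multiplication induced by concatenation (ordered disjoint union of domains, first word below second) and inverse induced by reversing the order and inverting letters. $\mathcal{H}^m$ denotes the subgroup of elements having a representative word using no letter from $\{a_n^{\pm1}\}_{n=0}^m$. *)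

(* Defs.v *)
From Stdlib Require Import List Arith Bool Sorted.
Import ListNotations.

Record group := Group {
  gcar :> Type;
  gmul : gcar -> gcar -> gcar;
  ginv : gcar -> gcar;
  gone : gcar;
  gmulA : forall x y z, gmul x (gmul y z) = gmul (gmul x y) z;
  gmul1l : forall x, gmul gone x = x;
  gmul1r : forall x, gmul x gone = x;
  gmulVl : forall x, gmul (ginv x) x = gone;
  gmulVr : forall x, gmul x (ginv x) = gone
}.
Arguments gmul {g}. Arguments ginv {g}. Arguments gone {g}.

Definition is_subgroup (G : group) (S : G -> Prop) : Prop :=
  S gone /\ (forall x y, S x -> S y -> S (gmul x y)) /\ (forall x, S x -> S (ginv x)).

Definition countable_pred (G : group) (S : G -> Prop) : Prop :=
  exists f : nat -> G, forall x, S x -> exists k, f k = x.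

Inductive gen (G : group) (A : G -> Prop) : G -> Prop :=
| gen_base : forall x, A x -> gen G A x
| gen_one : gen G A (@gone G)
| gen_mul : forall x y, gen G A x -> gen G A y -> gen G A (gmul x y)
| gen_inv : forall x, gen G A x -> gen G A (ginv x).

(** Words in elements of G and their inverses: (x,false) = x, (x,true) = x^-1. *)
Definition geval (G : group) (l : list (G * bool)) : G :=
  fold_right (fun (p : G * bool) (acc : G) => @gmul G (if snd p then ginv (fst p) else fst p) acc) (@gone G) l.

Fixpoint greduced (G : group) (l : list (G * bool)) : Prop :=
  match l with
  | p :: ((q :: _) as t) => ~ (fst p = fst q /\ snd p <> snd q) /\ greduced G t
  | _ => True
  end.

Definition free_subgroup (G : group) (S : G -> Prop) : Prop :=
  exists X : G -> Prop,
    (forall x, S x <-> gen G X x) /\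
    (forall l : list (G * bool), l <> [] -> Forall (fun p => X (fst p)) l ->
       greduced G l -> geval G l <> gone).

Definition aleph1_free (G : group) : Prop :=
  forall S : G -> Prop, is_subgroup G S -> countable_pred G S -> free_subgroup G S.

(** Letter (n, b) is a_n if b = false, a_n^{-1} if b = true. *)
Definition letter := (nat * bool)%type.

Record word := Word {
  wdom : Type;
  wlt : wdom -> wdom -> Prop;
  wlt_irrefl : forall i, ~ wlt i i;
  wlt_trans : forall i j k, wlt i j -> wlt j k -> wlt i k;
  wlt_total : forall i j, wlt i j \/ i = j \/ wlt j i;
  wlet : wdom -> letter;
  wfin : forall m, exists l : list wdom, forall i, fst (wlet i) <= m -> In i l
}.

(** l is p_m(W): the letters of W with index <= m, in order. *)
Definition wproj (m : nat) (W : word) (l : list letter) : Prop :=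
  exists ds : list (wdom W),
    StronglySorted (wlt W) ds /\
    (forall i, In i ds <-> fst (wlet W i) <= m) /\
    l = map (wlet W) ds.

Definition lcancel (a b : letter) : bool :=
  Nat.eqb (fst a) (fst b) && negb (Bool.eqb (snd a) (snd b)).

Fixpoint freduce (l : list letter) : list letter :=
  match l with
  | [] => []
  | a :: t => match freduce t with
              | b :: r => if lcancel a b then r else a :: b :: r
              | [] => [a]
              end
  end.

(** Equivalence: all projections are equal in the free group F(a_0..a_m). *)
Definition wequiv (W U : word) : Prop :=
  forall m l1 l2, wproj m W l1 -> wproj m U l2 -> freduce l1 = freduce l2.

Definition cat_lt (W U : word) (x y : wdom W + wdom U) : Prop :=
  match x, y with
  | inl a, inl b => wlt W a b
  | inl _, inr _ => True
  | inr _, inl _ => False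
  | inr a, inr b => wlt U a b
  end.

Definition cat_let (W U : word) (x : wdom W + wdom U) : letter :=
  match x with inl a => wlet W a | inr b => wlet U b end.

Lemma cat_irrefl W U : forall i, ~ cat_lt W U i i.
Proof. intros [a|b]; simpl; apply wlt_irrefl. Qed.

Lemma cat_trans W U : forall i j k, cat_lt W U i j -> cat_lt W U j k -> cat_lt W U i k.
Proof.
  intros [a|a] [b|b] [c|c]; simpl; try tauto; eauto using wlt_trans.
Qed.

Lemma cat_total W U : forall i j, cat_lt W U i j \/ i = j \/ cat_lt W U j i.
Proof.
  intros [a|a] [b|b]; simpl; auto.
  - destruct (wlt_total W a b) as [H|[H|H]]; subst; auto.
  - destruct (wlt_total U a b) as [H|[H|H]]; subst; auto.
Qed.

Lemma cat_fin W U : forall m, exists l : list (wdom W + wdom U),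
  forall i, fst (cat_let W U i) <= m -> In i l.
Proof.
  intros m. destruct (wfin W m) as [l1 H1]. destruct (wfin U m) as [l2 H2].
  exists (map inl l1 ++ map inr l2). intros [a|b] H; simpl in H;
  apply in_or_app; [left|right]; apply in_map; auto.
Qed.

Definition wcat (W U : word) : word :=
  Word (wdom W + wdom U) (cat_lt W U) (cat_irrefl W U) (cat_trans W U)
       (cat_total W U) (cat_let W U) (cat_fin W U).

(** A homomorphism H -> G, presented on representative words. *)
Definition hom_from_HE (G : group) (phi : word -> G) : Prop :=
  (forall W U, wequiv W U -> phi W = phi U) /\
  (forall W U, phi (wcat W U) = gmul (phi W) (phi U)).

(** x lies in phi(H^n): it is the image of a word using only letters a_k, k > n. *)
Definition in_image_HE_tail (G : group) (phi : word -> G) (n : nat) (x : G) : Prop :=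
  exists W : word, (forall i, n < fst (wlet W i)) /\ phi W = x.

(* Main.v *)
Require Import Defs.
From Stdlib Require Import List.
From Stdlib Require Import Arith Lia Bool Sorted Classical ClassicalEpsilon ProofIrrelevance Eqdep_dec Cantor.
Import ListNotations.


Section GroupLemmas.
Variable G : group.
Lemma mul_cancel_l (a x y : G) : gmul a x = gmul a y -> x = y.
Proof. intro H. rewrite <- (gmul1l G x), <- (gmul1l G y), <- (gmulVl G a), <- !gmulA, H. reflexivity. Qed.
Lemma inv_unique (x y : G) : gmul x y = gone -> y = ginv x.
Proof. intro H. apply (mul_cancel_l x). rewrite H, gmulVr. reflexivity. Qed.
Lemma inv_inv (x : G) : ginv (ginv x) = x.
Proof. symmetry. apply inv_unique. apply gmulVl. Qed.
Lemma inv_mul (x y : G) : ginv (gmul x y) = gmul (ginv y) (ginv x).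
Proof. symmetry. apply inv_unique. rewrite <- gmulA, (gmulA _ y), gmulVr, gmul1l, gmulVr. reflexivity. Qed.
Lemma inv_one : ginv (@gone G) = gone.
Proof. symmetry. apply inv_unique. apply gmul1l. Qed.

Fixpoint gpow (x : G) (k : nat) : G := match k with 0 => gone | S k => gmul x (gpow x k) end.
Lemma gpow_one k : gpow gone k = gone.
Proof. induction k; simpl; auto. rewrite IHk, gmul1l; auto. Qed.
Lemma gpow_conj (u c : G) k : gpow (gmul u (gmul c (ginv u))) k = gmul u (gmul (gpow c k) (ginv u)).
Proof. induction k; simpl. rewrite gmul1l, gmulVr; auto.
  rewrite IHk. rewrite <- !gmulA. f_equal. f_equal. rewrite (gmulA _ (ginv u) u), gmulVl, gmul1l. reflexivity. Qed.

Definition lt_of (p : G * bool) : G := if snd p then ginv (fst p) else fst p.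
Definition linv (p : G * bool) : G * bool := (fst p, negb (snd p)).
Definition inv_word (l : list (G * bool)) := rev (map linv l).
Definition compat (p q : G * bool) := ~ (fst p = fst q /\ snd p <> snd q).

Lemma geval_cons p l : geval G (p :: l) = gmul (lt_of p) (geval G l).
Proof. reflexivity. Qed.
Lemma geval_app l1 l2 : geval G (l1 ++ l2) = gmul (geval G l1) (geval G l2).
Proof. induction l1; simpl. rewrite gmul1l; auto. rewrite IHl1, gmulA. reflexivity. Qed.
Lemma lt_of_linv p : lt_of (linv p) = ginv (lt_of p).
Proof. destruct p as [x []]; unfold lt_of, linv; simpl; auto. rewrite inv_inv; auto. Qed.
Lemma inv_word_cons p l : inv_word (p :: l) = inv_word l ++ [linv p].
Proof. reflexivity. Qed.
Lemma geval_inv l : geval G (inv_word l) = ginv (geval G l).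
Proof. induction l. simpl. rewrite inv_one; auto.
  rewrite inv_word_cons, geval_app, IHl, (geval_cons a l), inv_mul. simpl. rewrite gmul1r. change (if negb (snd a) then ginv (fst a) else fst a) with (lt_of (linv a)). rewrite lt_of_linv. auto. Qed.
Lemma length_inv l : length (inv_word l) = length l.
Proof. unfold inv_word. rewrite length_rev, length_map. auto. Qed.
Lemma cancel_pair p q l : ~ compat p q -> geval G (p :: q :: l) = geval G l.
Proof. unfold compat. intro H. apply NNPP in H. destruct H as [H1 H2].
  destruct p as [x b], q as [y c]; simpl in *. subst.
  rewrite gmulA. replace (gmul (if b then ginv y else y) (if c then ginv y else y)) with (@gone G).
  apply gmul1l. destruct b, c; try congruence; symmetry; [apply gmulVl | apply gmulVr]. Qed.

Lemma red_tail p l : greduced G (p :: l) -> greduced G l.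
Proof. destruct l; simpl; tauto. Qed.
Lemma red_cons p l : greduced G l -> (forall q b, l = q :: b -> compat p q) -> greduced G (p :: l).
Proof. intros H1 H2. destruct l as [|q b]; simpl; auto. split; auto. apply (H2 q b); auto. Qed.
Lemma red_app l1 l2 : greduced G l1 -> greduced G l2 ->
  (forall a p q b, l1 = a ++ [p] -> l2 = q :: b -> compat p q) -> greduced G (l1 ++ l2).
Proof.
  induction l1 as [|x t IH]; intros H1 H2 J; simpl; auto.
  destruct t as [|y t'].
  - simpl. apply red_cons; auto. intros q b E. apply (J [] x q b); auto.
  - simpl in H1. destruct H1 as [Hxy Ht]. change ((y :: t') ++ l2) with (y :: (t' ++ l2)).
    simpl. split; auto. apply IH; auto. intros a p q b E1 E2. apply (J (x :: a) p q b); auto. rewrite E1; auto.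
Qed.
Lemma red_app_l l1 l2 : greduced G (l1 ++ l2) -> greduced G l1.
Proof. induction l1 as [|x t IH]; simpl; auto. destruct t as [|y t']; simpl; auto.
  intros [H1 H2]. split; auto. exact (IH H2). Qed.
Lemma red_app_r l1 l2 : greduced G (l1 ++ l2) -> greduced G l2.
Proof. induction l1 as [|x t IH]; simpl; auto. intro H. apply IH. apply (red_tail x). auto. Qed.
Lemma red_mid a p q b : greduced G (a ++ p :: q :: b) -> compat p q.
Proof. intro H. apply red_app_r in H. simpl in H. tauto. Qed.
Lemma compat_sym p q : compat p q -> compat q p.
Proof. unfold compat. intros H [H1 H2]. apply H. split; auto. Qed.
Lemma compat_linv p q : compat p q -> compat (linv q) (linv p).
Proof. unfold compat, linv; destruct p as [x b], q as [y c]; simpl. intros H [H1 H2]. apply H.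
  split; auto. destruct b, c; simpl in *; congruence. Qed.
Lemma red_inv l : greduced G l -> greduced G (inv_word l).
Proof. induction l as [|p t IH]; intros H; simpl; auto.
  rewrite inv_word_cons. apply red_app; auto. apply IH. eapply red_tail; eauto. simpl; auto.
  intros a x q b E1 E2. injection E2 as <- <-. destruct t as [|y t']. simpl in E1.
  destruct a as [|? [|]]; simpl in E1; try discriminate. 
  rewrite inv_word_cons in E1. apply app_inj_tail in E1. destruct E1 as [_ <-].
  apply compat_linv. simpl in H. tauto. Qed.

Section Free.
Variable X : G -> Prop.
Hypothesis indep : forall l : list (G * bool), l <> [] -> Forall (fun p => X (fst p)) l ->
       greduced G l -> geval G l <> gone.
Definition XW (l : list (G * bool)) := Forall (fun p => X (fst p)) l.

Lemma XW_app l1 l2 : XW l1 -> XW l2 -> XW (l1 ++ l2).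
Proof. intros; apply Forall_app; auto. Qed.
Lemma XW_inv l : XW l -> XW (inv_word l).
Proof. unfold XW, inv_word. intro H. apply Forall_rev. apply Forall_map. eapply Forall_impl; [|exact H]. intros [a b]; simpl; auto. Qed.

Lemma uniq_red r1 r2 : XW r1 -> XW r2 -> greduced G r1 -> greduced G r2 -> geval G r1 = geval G r2 -> r1 = r2.
Proof.
  revert r2. induction r1 as [|p t1 IH]; intros r2 X1 X2 R1 R2 E.
  - destruct r2 as [|q t2]; auto. exfalso. apply (indep (q :: t2)); auto. discriminate.
  - destruct r2 as [|q t2].
    + exfalso. apply (indep (p :: t1)); auto. discriminate.
    + destruct (classic (p = q)) as [<-|Hpq].
      * f_equal. apply IH; auto. inversion X1; auto. inversion X2; auto.
        eapply red_tail; eauto. eapply red_tail; eauto.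
        rewrite !geval_cons in E. eapply mul_cancel_l; eauto.
      * exfalso. apply (indep (inv_word (q :: t2) ++ p :: t1)).
        -- destruct (inv_word (q :: t2)); discriminate.
        -- apply XW_app; auto. apply XW_inv; auto.
        -- apply red_app; auto. apply red_inv; auto.
           intros a x y b E1 E2. rewrite inv_word_cons in E1. apply app_inj_tail in E1.
           destruct E1 as [_ <-]. injection E2 as <- <-.
           unfold compat, linv. destruct p as [x1 b1], q as [x2 b2]; simpl. intros [H1 H2].
           apply Hpq. destruct b1, b2; simpl in *; congruence.
        -- rewrite geval_app, geval_inv, E. apply gmulVl.
Qed.

Lemma reduce_ex l : XW l -> exists r, XW r /\ greduced G r /\ geval G r = geval G l /\ length r <= length l.
Proof.
  induction l as [|p t IH]; intro H.
  - exists []. simpl; repeat split; auto.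
  - inversion H; subst. destruct IH as [r [Xr [Rr [Er Lr]]]]; auto.
    destruct r as [|q r'].
    + exists [p]. repeat split; auto. constructor; auto. rewrite !(geval_cons p), <- Er. reflexivity. simpl; lia.
    + destruct (classic (compat p q)) as [C|C].
      * exists (p :: q :: r'). split; [constructor; auto|]. split; [simpl; split; auto|].
        split. rewrite (geval_cons p (q::r')), (geval_cons p t), <- Er. reflexivity. simpl in *. lia.
      * exists r'. inversion Xr; subst. split; auto. split. eapply red_tail; eauto.
        split. rewrite (geval_cons p t), <- Er. rewrite <- (cancel_pair p q r' C). auto. simpl in *; lia.
Qed.

Lemma gen_word A x : gen G A x -> exists l, Forall (fun p => A (fst p)) l /\ geval G l = x.
Proof.
  induction 1.
  - exists [(x, false)]. split. constructor; auto. simpl. apply gmul1r.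
  - exists []. split; auto.
  - destruct IHgen1 as [l1 [H1 E1]], IHgen2 as [l2 [H2 E2]]. exists (l1 ++ l2).
    split. apply Forall_app; auto. rewrite geval_app; congruence.
  - destruct IHgen as [l [H1 E1]]. exists (inv_word l). split.
    unfold inv_word. apply Forall_rev. apply Forall_map. eapply Forall_impl; [|exact H1]. intros [a b]; simpl; auto.
    rewrite geval_inv; congruence.
Qed.

Definition len (x : G) (n : nat) := exists r, XW r /\ greduced G r /\ geval G r = x /\ length r = n.
Lemma len_fun x n m : len x n -> len x m -> n = m.
Proof. intros [r1 [A1 [B1 [C1 D1]]]] [r2 [A2 [B2 [C2 D2]]]]. subst.
  rewrite (uniq_red r1 r2); auto. Qed.
Lemma len_ex x : gen G X x -> exists n, len x n.
Proof. intro H. destruct (gen_word _ _ H) as [l [Hl E]].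
  destruct (reduce_ex l Hl) as [r [A [B [C D]]]]. exists (length r), r. repeat split; auto. congruence. Qed.
Definition ell (x : G) : nat := epsilon (inhabits 0) (len x).
Lemma ell_spec x : gen G X x -> len x (ell x).
Proof. intro H. unfold ell. apply epsilon_spec. apply len_ex; auto. Qed.
Lemma ell_eq x n : len x n -> ell x = n.
Proof. intro H. unfold ell. apply (len_fun x); auto. apply epsilon_spec. eauto. Qed.

Lemma ell_one : ell gone = 0.
Proof. apply ell_eq. exists []. repeat split; auto. constructor. Qed.
Lemma ell_mul x y : gen G X x -> gen G X y -> ell (gmul x y) <= ell x + ell y.
Proof. intros Hx Hy. destruct (ell_spec x Hx) as [r1 [A1 [B1 [C1 D1]]]].
  destruct (ell_spec y Hy) as [r2 [A2 [B2 [C2 D2]]]].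
  destruct (reduce_ex (r1 ++ r2)) as [r [A [B [C D]]]]. apply XW_app; auto.
  rewrite (ell_eq _ (length r)). rewrite length_app in D. lia.
  exists r. repeat split; auto. rewrite C, geval_app. congruence. Qed.
Lemma ell_inv x : gen G X x -> ell (ginv x) = ell x.
Proof. intros Hx. destruct (ell_spec x Hx) as [r1 [A1 [B1 [C1 D1]]]].
  apply ell_eq. exists (inv_word r1). repeat split. apply XW_inv; auto. apply red_inv; auto.
  rewrite geval_inv; congruence. rewrite length_inv; auto. Qed.

Definition cyclic (c : list (G * bool)) := forall a p q b, c = a ++ [p] -> c = q :: b -> compat p q.

Lemma cyc_dec : forall N r, length r <= N -> r <> [] -> greduced G r ->
  exists u c, r = u ++ c ++ inv_word u /\ c <> [] /\ cyclic c.
Proof.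
  induction N as [|N IH]; intros r Hl Hn Hr.
  - destruct r; simpl in *; [congruence | lia].
  - destruct (classic (cyclic r)) as [Hc|Hc].
    + exists [], r. simpl. rewrite app_nil_r. auto.
    + unfold cyclic in Hc. apply not_all_ex_not in Hc. destruct Hc as [a Hc].
      apply not_all_ex_not in Hc. destruct Hc as [p Hc].
      apply not_all_ex_not in Hc. destruct Hc as [q Hc].
      apply not_all_ex_not in Hc. destruct Hc as [b Hc].
      apply imply_to_and in Hc. destruct Hc as [E1 Hc].
      apply imply_to_and in Hc. destruct Hc as [E2 Hc].
      subst r. destruct a as [|q' m].
      * simpl in E2. injection E2 as -> ->. exfalso. apply Hc. unfold compat. intros [_ H]. auto.
      * simpl in E2. injection E2 as <- Eb.
        destruct m as [|z m'].
        -- simpl in Hr. exfalso. apply Hc. apply compat_sym. tauto.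
        -- assert (Hm : greduced G (z :: m')).
           { apply red_tail in Hr. eapply red_app_l; eauto. }
           assert (HlN : length (z :: m') <= N).
           { simpl in Hl. rewrite length_app in Hl. simpl in *. lia. }
           destruct (IH (z :: m') HlN ltac:(discriminate) Hm) as [u [c [Em [Hcn Hcc]]]].
           exists (q' :: u), c. split; auto.
           assert (p = linv q'). { unfold compat in Hc. apply NNPP in Hc. destruct Hc as [H1 H2].
             destruct p as [x1 b1], q' as [x2 b2]; unfold linv; simpl in *. subst. destruct b1, b2; simpl in *; congruence. }
           subst p. rewrite inv_word_cons. rewrite Em. simpl. rewrite !app_assoc. auto.
Qed.

Fixpoint wpow (c : list (G * bool)) k := match k with 0 => [] | S k => c ++ wpow c k end.
Lemma geval_wpow c k : geval G (wpow c k) = gpow (geval G c) k.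
Proof. induction k; simpl; auto. rewrite geval_app, IHk. auto. Qed.
Lemma length_wpow c k : length (wpow c k) = k * length c.
Proof. induction k; simpl; auto. rewrite length_app, IHk. auto. Qed.
Lemma XW_wpow c k : XW c -> XW (wpow c k).
Proof. intro H. induction k; simpl. constructor. apply XW_app; auto. Qed.
Lemma wpow_last c k a p : 0 < k -> c = a ++ [p] -> exists a', wpow c k = a' ++ [p].
Proof. intros Hk E. destruct k as [|k]; [lia|]. induction k.
  - simpl. rewrite app_nil_r. eauto.
  - destruct IHk as [a' Ha']. lia. exists (c ++ a'). simpl in *. rewrite Ha', app_assoc. auto. Qed.
Lemma wpow_head c k : 0 < k -> forall q b, wpow c k = q :: b -> exists b', c = q :: b' \/ c = [].
Proof. intros Hk q b E. destruct k; [lia|]. simpl in E. destruct c as [|x c']. exists []; right; reflexivity.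
  simpl in E. injection E as -> _. exists c'; left; reflexivity. Qed.
Lemma red_wpow c k : c <> [] -> greduced G c -> cyclic c -> greduced G (wpow c k).
Proof. intros Hn Hr Hc. induction k; simpl; auto.
  apply red_app; auto. intros a p q b E1 E2.
  destruct k. simpl in E2. discriminate.
  destruct (wpow_head c (S k) ltac:(lia) q b E2) as [b' [E|E]]; [|congruence].
  apply (Hc a p q b'); auto. Qed.

Lemma ell_pow x k : gen G X x -> x <> gone -> 0 < k -> ell x + k - 1 <= ell (gpow x k).
Proof.
  intros Hx Hne Hk. destruct (ell_spec x Hx) as [r [A [B [C D]]]].
  assert (Hrn : r <> []). { intro E; subst; apply Hne; auto. }
  destruct (cyc_dec (length r) r (le_n _) Hrn B) as [u [c [Er [Hcn Hcc]]]].
  assert (Xu : XW u /\ XW c). { rewrite Er in A. apply Forall_app in A. destruct A as [A1 A2].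
     apply Forall_app in A2. tauto. }
  destruct Xu as [Xu Xc].
  assert (Ru : greduced G u). { rewrite Er in B. eapply red_app_l; eauto. }
  assert (Rc : greduced G c). { rewrite Er in B. apply red_app_r in B. eapply red_app_l; eauto. }
  rewrite (ell_eq (gpow x k) (length (u ++ wpow c k ++ inv_word u))).
  - rewrite <- D, Er, !length_app, length_wpow, length_inv.
    destruct (length c) eqn:Lc. destruct c; simpl in Lc; congruence. nia.
  - exists (u ++ wpow c k ++ inv_word u). repeat split.
    + apply XW_app; auto. apply XW_app. apply XW_wpow; auto. apply XW_inv; auto.
    + apply red_app; auto. apply red_app. apply red_wpow; auto. apply red_inv; auto.
      * intros a p q b E1 E2. destruct (classic (c = [])) as [|Hc']; [congruence|].
        destruct (exists_last Hcn) as [c' [z Ez]].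
        destruct (wpow_last c k c' z Hk Ez) as [a' Ha']. rewrite Ha' in E1. apply app_inj_tail in E1.
        destruct E1 as [_ <-]. rewrite Er, Ez, E2 in B. apply (red_mid (u ++ c') z q b). rewrite <- app_assoc. simpl. rewrite <- app_assoc in B. exact B.
      * intros a p q b E1 E2. 
        destruct k as [|k']; [lia|]. destruct c as [|c0 cs]; [congruence|]. simpl in E2. injection E2 as <- _.
        rewrite Er, E1 in B. apply (red_mid a p c0 (cs ++ inv_word (a ++ [p]))). rewrite <- app_assoc in B. exact B.
    + rewrite !geval_app, geval_wpow, geval_inv. rewrite <- gpow_conj. f_equal.
      rewrite <- C, Er, !geval_app, geval_inv. auto.
Qed.
End Free.
End GroupLemmas.

Lemma sorted_uniq {A} (lt : A -> A -> Prop) (irr : forall x, ~ lt x x)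
  (tr : forall x y z, lt x y -> lt y z -> lt x z) :
  forall l1 l2, StronglySorted lt l1 -> StronglySorted lt l2 -> (forall x, In x l1 <-> In x l2) -> l1 = l2.
Proof.
  induction l1 as [|a t IH]; intros l2 S1 S2 E.
  - destruct l2 as [|b t2]; auto. exfalso. apply (proj2 (E b)). left; auto.
  - destruct l2 as [|b t2]. exfalso. apply (proj1 (E a)). left; auto.
    inversion S1; subst. inversion S2; subst.
    assert (a = b).
    { destruct (classic (a = b)) as [|Hab]; auto. exfalso.
      assert (Ha : In a t2). { destruct (proj1 (E a) (or_introl eq_refl)) as [Hq|Hq]; [exfalso; apply Hab; auto|exact Hq]. }
      assert (Hb : In b t). { destruct (proj2 (E b) (or_introl eq_refl)) as [Hq|Hq]; [exfalso; apply Hab; auto|exact Hq]. }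
      pose proof (proj1 (Forall_forall _ _) H2 _ Hb).
      pose proof (proj1 (Forall_forall _ _) H4 _ Ha). apply (irr a). eauto. }
    subst b. f_equal. apply IH; auto. intro x. split; intro Hx.
    + destruct (proj1 (E x) (or_intror Hx)) as [<-|]; auto. exfalso.
      apply (irr a). exact (proj1 (Forall_forall _ _) H2 _ Hx).
    + destruct (proj2 (E x) (or_intror Hx)) as [<-|]; auto. exfalso.
      apply (irr a). exact (proj1 (Forall_forall _ _) H4 _ Hx).
Qed.

Lemma iso_wequiv (A B : word) (f : wdom A -> wdom B) :
  (forall i j, wlt A i j -> wlt B (f i) (f j)) -> (forall i, wlet B (f i) = wlet A i) ->
  (forall y, exists x, f x = y) -> wequiv A B.
Proof.
  intros Hmono Hlet Hsurj m l1 l2 [ds1 [S1 [I1 E1]]] [ds2 [S2 [I2 E2]]].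
  assert (map f ds1 = ds2).
  { apply (sorted_uniq (wlt B)). apply wlt_irrefl. apply wlt_trans.
    - clear -S1 Hmono. induction S1; simpl; constructor; auto.
      apply Forall_map. eapply Forall_impl; [|exact H]. auto.
    - auto.
    - intro y. rewrite I2. split.
      + intro H. apply in_map_iff in H. destruct H as [x [<- Hx]]. rewrite Hlet. apply I1; auto.
      + intro H. destruct (Hsurj y) as [x <-]. apply in_map. apply I1. rewrite <- Hlet. auto. }
  subst. f_equal. rewrite map_map. apply map_ext. auto.
Qed.

Fixpoint pw (V : word) (k : nat) : word := match k with 0 => V | S k => wcat V (pw V k) end.
Fixpoint pdec (V : word) (k : nat) : wdom (pw V k) -> nat * wdom V :=
  match k return wdom (pw V k) -> nat * wdom V with
  | 0 => fun x => (0, x)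
  | S k => fun z => match z with inl x => (0, x) | inr y => let r := pdec V k y in (S (fst r), snd r) end
  end.
Lemma pdec_le V k y : fst (pdec V k y) <= k.
Proof. induction k; simpl; auto. destruct y as [x|y]; simpl; auto. lia. specialize (IHk y). lia. Qed.
Lemma pdec_let V k y : wlet (pw V k) y = wlet V (snd (pdec V k y)).
Proof. induction k; simpl; auto. destruct y as [x|y]; simpl; auto. Qed.
Lemma pdec_lt V k y y' : wlt (pw V k) y y' ->
  fst (pdec V k y) < fst (pdec V k y') \/ (fst (pdec V k y) = fst (pdec V k y') /\ wlt V (snd (pdec V k y)) (snd (pdec V k y'))).
Proof. induction k; simpl; auto. destruct y as [x|y], y' as [x'|y']; simpl; intro H; auto; try tauto.
  left. lia. destruct (IHk y y' H); [left; lia | right; destruct H0; split; auto]. Qed.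
Lemma pdec_surj V k j x : j <= k -> exists y, pdec V k y = (j, x).
Proof. revert j. induction k; intros j Hj; simpl.
  - assert (j = 0) by lia. subst. exists x; auto.
  - destruct j. exists (inl x); auto. destruct (IHk j) as [y Hy]. lia. exists (inr y). rewrite Hy; auto. Qed.

Section Infinite.
Variable W : nat -> word.
Variable K : nat -> nat.
Hypothesis HW : forall n i, n < fst (wlet (W n) i).

Definition T := {m : nat & wdom (W m)}.
Definition ltT (a b : T) : Prop := exists e : projT1 a = projT1 b,
  wlt (W (projT1 b)) (eq_rect _ (fun m => wdom (W m)) (projT2 a) _ e) (projT2 b).
Definition letT (a : T) : letter := wlet (W (projT1 a)) (projT2 a).

Lemma ltT_irrefl a : ~ ltT a a.
Proof. destruct a as [m p]. intros [e H]. simpl in *. rewrite (UIP_refl_nat _ e) in H. simpl in H.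
  exact (wlt_irrefl _ _ H). Qed.
Lemma ltT_trans a b c : ltT a b -> ltT b c -> ltT a c.
Proof. destruct a as [m1 p1], b as [m2 p2], c as [m3 p3]. intros [e1 H1] [e2 H2]. simpl in *.
  destruct e1, e2. simpl in *. exists eq_refl. simpl. eapply wlt_trans; eauto. Qed.
Lemma ltT_total a b : projT1 a = projT1 b -> ltT a b \/ a = b \/ ltT b a.
Proof. destruct a as [m1 p1], b as [m2 p2]. simpl. intro e. destruct e.
  destruct (wlt_total _ p1 p2) as [H|[H|H]].
  - left. exists eq_refl. auto.
  - subst. auto.
  - right; right. exists eq_refl. auto. Qed.

Fixpoint jlt (a b : list nat) : Prop :=
  match a, b with
  | [], [] => False
  | [], _ :: _ => True
  | _ :: _, [] => False
  | x :: a', y :: b' => x < y \/ (x = y /\ jlt a' b')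
  end.
Lemma jlt_irrefl a : ~ jlt a a.
Proof. induction a; simpl; auto. intros [H|[_ H]]; [lia|auto]. Qed.
Lemma jlt_trans a b c : jlt a b -> jlt b c -> jlt a c.
Proof. revert b c. induction a as [|x a IH]; intros [|y b] [|z c]; simpl; auto; try tauto.
  intros [H1|[H1 H2]] [H3|[H3 H4]]; subst; try (left; lia). right; split; eauto. Qed.
Lemma jlt_total a b : jlt a b \/ a = b \/ jlt b a.
Proof. revert b. induction a as [|x a IH]; intros [|y b]; simpl; auto.
  destruct (lt_eq_lt_dec x y) as [[H|H]|H]; auto. subst. destruct (IH b) as [H|[H|H]]; subst; auto. Qed.

Fixpoint valid (n : nat) (js : list nat) : Prop :=
  match js with [] => True | j :: t => j <= K n /\ valid (S n) t end.
Definition vpred (n : nat) (x : list nat * T) : Prop := valid n (fst x) /\ projT1 (snd x) = length (fst x) + n.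
Definition dom (n : nat) := {x : list nat * T | vpred n x}.
Definition plt (x y : list nat * T) := jlt (fst x) (fst y) \/ (fst x = fst y /\ ltT (snd x) (snd y)).
Definition ult n (x y : dom n) := plt (proj1_sig x) (proj1_sig y).
Definition ulet n (x : dom n) := letT (snd (proj1_sig x)).

Lemma ult_irrefl n : forall i, ~ ult n i i.
Proof. intros [[js q] v]. unfold ult, plt; simpl. intros [H|[_ H]]. eapply jlt_irrefl; eauto. eapply ltT_irrefl; eauto. Qed.
Lemma ult_trans n : forall i j k, ult n i j -> ult n j k -> ult n i k.
Proof. intros [[js1 q1] v1] [[js2 q2] v2] [[js3 q3] v3]. unfold ult, plt; simpl.
  intros [H1|[H1 H2]] [H3|[H3 H4]]; subst; auto. left; eapply jlt_trans; eauto.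
  right; split; auto; eapply ltT_trans; eauto. Qed.
Lemma ult_total n : forall i j, ult n i j \/ i = j \/ ult n j i.
Proof. intros [[js1 q1] v1] [[js2 q2] v2]. unfold ult, plt; simpl.
  destruct (jlt_total js1 js2) as [H|[H|H]]; auto. subst.
  destruct (ltT_total q1 q2) as [H|[H|H]]; auto.
  destruct v1 as [_ e1], v2 as [_ e2]. simpl in *. congruence.
  subst. right; left. f_equal. apply proof_irrelevance. Qed.

Fixpoint allpaths (n len : nat) : list (list nat) :=
  match len with
  | 0 => [[]]
  | S l => flat_map (fun j => map (cons j) (allpaths (S n) l)) (seq 0 (S (K n)))
  end.
Lemma allpaths_in js : forall n, valid n js -> In js (allpaths n (length js)).
Proof. induction js as [|j t IH]; intros n Hv. simpl; auto. destruct Hv as [H1 H2].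
  change (length (j :: t)) with (S (length t)). unfold allpaths; fold allpaths.
  apply in_flat_map. exists j. split. apply in_seq. lia. apply in_map. auto. Qed.

Lemma sig_list {A} (P : A -> Prop) (l : list A) : exists l' : list (sig P), forall x : sig P, In (proj1_sig x) l -> In x l'.
Proof. induction l as [|a t IH]. exists []. simpl; tauto.
  destruct IH as [l' H]. destruct (classic (P a)) as [Ha|Ha].
  - exists (exist P a Ha :: l'). intros [x Hx] [E|E]; simpl in *.
    + subst. left. f_equal. apply proof_irrelevance.
    + right. apply (H (exist P x Hx)). auto.
  - exists l'. intros [x Hx] [E|E]; simpl in *. subst; contradiction. apply (H (exist P x Hx)). auto. Qed.

Lemma Tlist M : forall M', exists L : list T, forall m p, m < M' -> fst (wlet (W m) p) <= M -> In (existT _ m p) L.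
Proof. induction M' as [|M' IH]. exists []; intros; lia.
  destruct IH as [L HL]. destruct (wfin (W M') M) as [l Hl].
  exists (L ++ map (fun p => existT (fun m => wdom (W m)) M' p) l). intros m p Hm Hp.
  apply in_or_app. destruct (Nat.eq_dec m M') as [->|Hne]. right. apply in_map. auto.
  left. apply HL; auto. lia. Qed.

Lemma ufin n : forall M, exists l : list (dom n), forall i, fst (ulet n i) <= M -> In i l.
Proof.
  intro M. destruct (Tlist M M) as [L HL].
  destruct (sig_list (vpred n) (flat_map (fun len => flat_map (fun js => map (pair js) L) (allpaths n len)) (seq 0 M)))
    as [l' Hl']. exists l'. intros [[js [m p]] [v e]] Hi. apply Hl'. simpl in *.
  unfold ulet, letT in Hi; simpl in Hi. pose proof (HW m p).
  apply in_flat_map. exists (length js). split. apply in_seq. lia.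
  apply in_flat_map. exists js. split. apply allpaths_in; auto. apply in_map. apply HL; lia.
Qed.

Definition U (n : nat) : word :=
  Word (dom n) (ult n) (ult_irrefl n) (ult_trans n) (ult_total n) (ulet n) (ufin n).

Lemma gmap_valid n (y : wdom (pw (U (S n)) (K n))) :
  vpred n (fst (pdec _ _ y) :: fst (proj1_sig (snd (pdec _ _ y))), snd (proj1_sig (snd (pdec _ _ y)))).
Proof. pose proof (pdec_le _ _ y). destruct (snd (pdec (U (S n)) (K n) y)) as [[js q] [v e]].
  unfold vpred in *; simpl in *. split; auto. rewrite e. lia. Qed.

Definition gmap n (z : wdom (wcat (W n) (pw (U (S n)) (K n)))) : dom n :=
  match z with
  | inl p => exist (vpred n) ([], existT (fun m => wdom (W m)) n p) (conj I eq_refl)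
  | inr y => exist (vpred n) _ (gmap_valid n y)
  end.

Lemma U_eq n : wequiv (wcat (W n) (pw (U (S n)) (K n))) (U n).
Proof.
  apply (iso_wequiv _ (U n) (gmap n)).
  - intros [p|y] [p'|y']; simpl; unfold ult, plt; simpl; try tauto.
    + intro H. right. split; auto. exists eq_refl. auto.
    + intro H. apply pdec_lt in H. destruct H as [H|[H1 H2]]; [left; left; exact H|]. change (plt (proj1_sig (snd (pdec (U (S n)) (K n) y))) (proj1_sig (snd (pdec (U (S n)) (K n) y')))) in H2. unfold plt in H2. destruct H2 as [H2|[H2 H3]]; [left; right; auto|right; split; [f_equal; [exact H1|exact H2]|exact H3]].


  - intros [p|y]; simpl; auto. unfold ulet; simpl. rewrite pdec_let. reflexivity.
  - intros [[js [m p]] [v e]]. destruct js as [|j t].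
    + simpl in e. subst m. exists (inl p). simpl. f_equal. apply proof_irrelevance.
    + destruct v as [Hj Hv]. simpl in e.
      assert (v' : vpred (S n) (t, existT (fun m => wdom (W m)) m p)). { split; auto. simpl. lia. }
      destruct (pdec_surj (U (S n)) (K n) j (exist _ _ v') Hj) as [y Hy].
      exists (inr y). unfold gmap. apply eq_sig_hprop. intros; apply proof_irrelevance.
      simpl. rewrite Hy. reflexivity.
Qed.

End Infinite.

Lemma geval_gen (G : group) (P : G -> Prop) l : Forall (fun p => P (fst p)) l -> gen G P (geval G l).
Proof. induction 1; simpl. apply gen_one. apply gen_mul; auto.
  destruct (snd x). apply gen_inv, gen_base; auto. apply gen_base; auto. Qed.

Definition pr (p : nat * nat) : nat := to_nat p.
Lemma pr_inj p q : pr p = pr q -> p = q.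
Proof. unfold pr. intro E. rewrite <- (cancel_of_to p), <- (cancel_of_to q), E. auto. Qed.
Global Opaque pr.
Fixpoint code (l : list (nat * bool)) : nat :=
  match l with [] => 0 | (i, b) :: t => S (pr (pr (i, if b then 1 else 0), code t)) end.
Lemma code_inj l1 l2 : code l1 = code l2 -> l1 = l2.
Proof. revert l2. induction l1 as [|[i b] t IH]; intros [|[j c] t2]; cbn [code]; try discriminate; auto.
  intro E. injection E as E. apply pr_inj in E.
  injection E as E1 E2. apply pr_inj in E1.
  injection E1 as -> E1. f_equal. f_equal. destruct b, c; simpl in *; congruence. auto. Qed.

Lemma countable_gen (G : group) (A : G -> Prop) (a : nat -> G) :
  (forall y, A y -> exists i, a i = y) -> countable_pred G (gen G A).
Proof.
  intro Ha. pose (ev := fun l : list (nat * bool) => geval G (map (fun p => (a (fst p), snd p)) l)).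
  exists (fun n => epsilon (inhabits gone) (fun x => exists l, code l = n /\ x = ev l)).
  intros x Hx. destruct (gen_word G A x Hx) as [l [Hl El]].
  assert (Hli : exists li, map (fun p => (a (fst p), snd p)) li = l).
  { clear El. induction Hl as [|[y b] t Hy Ht IH]. exists []; auto.
    destruct IH as [li Hli]. destruct (Ha y Hy) as [i Hi]. exists ((i, b) :: li). simpl. congruence. }
  destruct Hli as [li Hli]. exists (code li).
  assert (Hex : exists x, exists l, code l = code li /\ x = ev l) by eauto.
  destruct (epsilon_spec (inhabits gone) _ Hex) as [l' [E1 E2]]. rewrite E2.
  apply code_inj in E1. subst. unfold ev. reflexivity.
Qed.

Theorem lemma2p3 (G : group) (HG : aleph1_free G) (phi : word -> G)
  (Hphi : hom_from_HE G phi) (gs : list G) :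
  exists n : nat, forall x : G,
    in_image_HE_tail G phi n x -> gen G (fun y => In y gs) x -> x = gone.
Proof.
  destruct (classic (exists n : nat, forall x : G,
    in_image_HE_tail G phi n x -> gen G (fun y => In y gs) x -> x = gone)) as [H|H]; [exact H|exfalso].
  assert (Hall : forall n, exists p : word * list (G * bool), (forall i, n < fst (wlet (fst p) i)) /\
     phi (fst p) <> gone /\ Forall (fun q => In (fst q) gs) (snd p) /\ geval G (snd p) = phi (fst p)).
  { intro n. pose proof (not_ex_all_not _ _ H n) as H1. apply not_all_ex_not in H1.
    destruct H1 as [x Hx]. apply imply_to_and in Hx. destruct Hx as [[Wd [HW1 HW2]] Hx].
    apply imply_to_and in Hx. destruct Hx as [Hg Hne]. destruct (gen_word G _ _ Hg) as [l [Hl El]].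
    exists (Wd, l). simpl. subst. repeat split; auto. }
  pose (c := fun n => proj1_sig (constructive_indefinite_description _ (Hall n))).
  assert (Hc : forall n, (forall i, n < fst (wlet (fst (c n)) i)) /\
     phi (fst (c n)) <> gone /\ Forall (fun q => In (fst q) gs) (snd (c n)) /\ geval G (snd (c n)) = phi (fst (c n))).
  { intro n. exact (proj2_sig (constructive_indefinite_description _ (Hall n))). }
  pose (Wf := fun n => fst (c n)). pose (L := fun n => length (snd (c n))).
  pose (Kf := fun n => n * L n + 1).
  assert (HW : forall n i, n < fst (wlet (Wf n) i)). { intros n. apply (Hc n). }
  pose (g := fun n => phi (U Wf Kf HW n)). pose (f := fun n => phi (Wf n)).
  destruct Hphi as [Hp1 Hp2].
  assert (Hpw : forall V k, phi (pw V k) = gpow G (phi V) (S k)).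
  { intros V k. induction k; simpl. rewrite gmul1r; auto. rewrite Hp2, IHk. auto. }
  assert (Hrec : forall n, g n = gmul (f n) (gpow G (g (S n)) (S (Kf n)))).
  { intro n. unfold g. rewrite <- (Hp1 _ _ (U_eq Wf Kf HW n)). rewrite Hp2, Hpw. auto. }
  pose (A := fun y => In y gs \/ exists n, y = g n).
  assert (Hsub : is_subgroup G (gen G A)).
  { split. apply gen_one. split. intros; apply gen_mul; auto. intros; apply gen_inv; auto. }
  assert (Hcnt : countable_pred G (gen G A)).
  { apply (countable_gen G A (fun i => if i <? length gs then nth i gs gone else g (i - length gs))).
    intros y [Hy|[n ->]].
    - destruct (In_nth _ _ gone Hy) as [i [Hi Ei]]. exists i.
      destruct (Nat.ltb_spec i (length gs)); [auto|lia].
    - exists (length gs + n). destruct (Nat.ltb_spec (length gs + n) (length gs)); [lia|].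
      f_equal. lia. }
  destruct (HG _ Hsub Hcnt) as [X [HSX indep]].
  pose (ell := @ell G X).
  assert (Sg : forall n, gen G X (g n)). { intro n. apply HSX. apply gen_base. right; eauto. }
  assert (Sgs : forall y, In y gs -> gen G X y). { intros y Hy. apply HSX. apply gen_base. left; auto. }
  assert (Sf : forall n, gen G X (f n)).
  { intro n. apply HSX. unfold f, Wf. rewrite <- (proj2 (proj2 (proj2 (Hc n)))).
    apply geval_gen. eapply Forall_impl; [|exact (proj1 (proj2 (proj2 (Hc n))))].
    intros q Hq. left; auto. }
  pose (C := fold_right (fun y acc => ell y + acc) 0 gs).
  assert (HC : forall y, In y gs -> ell y <= C).
  { unfold C. clear. induction gs as [|y0 t IH]; simpl; intros y Hy. contradiction.
    destruct Hy as [<-|Hy]. lia. specialize (IH y Hy). lia. }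
  assert (Hlw : forall l, Forall (fun q => In (fst q) gs) l -> ell (geval G l) <= C * length l /\ gen G X (geval G l)).
  { induction 1 as [|[y b] t Hy Ht [IH1 IH2]]; simpl.
    - unfold ell. rewrite (ell_one G X indep). split; [lia|apply gen_one].
    - simpl in Hy. assert (Hl : ell (if b then ginv y else y) <= C /\ gen G X (if b then ginv y else y)).
      { destruct b. unfold ell. rewrite (ell_inv G X indep); auto. split. apply HC; auto. apply gen_inv; auto.
        split; auto. }
      destruct Hl as [Hl1 Hl2]. split. 
      + eapply Nat.le_trans. apply (ell_mul G X indep); auto. unfold ell in *. nia.
      + apply gen_mul; auto. }
  assert (Hf : forall n, ell (f n) <= C * L n).
  { intro n. unfold f, Wf, L. rewrite <- (proj2 (proj2 (proj2 (Hc n)))). apply Hlw. apply (Hc n). }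
  assert (Hfne : forall n, f n <> gone). { intro n. apply (Hc n). }
  assert (E1 : forall n, gpow G (g (S n)) (S (Kf n)) = gmul (ginv (f n)) (g n)).
  { intro n. rewrite (Hrec n), gmulA, gmulVl, gmul1l. auto. }
  assert (Ineq : forall n, g (S n) <> gone -> ell (g (S n)) + n * L n + 1 <= C * L n + ell (g n)).
  { intros n Hne. pose proof (ell_pow G X indep (g (S n)) (S (Kf n)) (Sg _) Hne ltac:(lia)) as P1.
    rewrite E1 in P1. pose proof (ell_mul G X indep (ginv (f n)) (g n) (gen_inv _ _ _ (Sf n)) (Sg n)) as P2.
    rewrite (ell_inv G X indep _ (Sf n)) in P2. pose proof (Hf n). unfold ell in *. unfold Kf in P1. lia. }
  assert (Cl1 : forall n, C <= n -> g (S n) <> gone -> ell (g (S n)) < ell (g n)).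
  { intros n Hn Hne. pose proof (Ineq n Hne). assert (C * L n <= n * L n) by (apply Nat.mul_le_mono_r; auto). lia. }
  assert (Cl2 : forall n, C <= n -> g (S n) <> gone).
  { intros n Hn Heq. assert (Hne : g (S (S n)) <> gone).
    { intro Heq2. pose proof (E1 (S n)) as E. rewrite Heq2, gpow_one, Heq, gmul1r in E.
      apply (Hfne (S n)). rewrite <- (inv_inv G (f (S n))), <- E. apply inv_one. }
    pose proof (Cl1 (S n) ltac:(lia) Hne). rewrite Heq in H0. unfold ell in H0.
    rewrite (ell_one G X indep) in H0. lia. }
  assert (Desc : forall j, ell (g (C + j)) + j <= ell (g C)).
  { induction j. replace (C + 0) with C by lia. lia.
    pose proof (Cl1 (C + j) ltac:(lia) (Cl2 (C + j) ltac:(lia))). replace (C + S j) with (S (C + j)) by lia. lia. }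
  pose proof (Desc (S (ell (g C)))). lia.
Qed.
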